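(* Let Alice hold a string $A$ and Bob hold strings $B_1,\ldots,B_k$, and let $\ell=\max_i\mathrm{LCP}(A,B_i)$. Using a randomized public-coin protocol, they can find a number $\ell'\ge\ell$ such that either (1) $\ell'\le\ell^2$, using $O(\lg\lg\ell)$ rounds and $O(\lg\lg\ell\,\lg k)$ total communication, or (2) $\ell'\le|A|^2$, using $O(1)$ rounds and $O(\lg\lg\lg|A|)$ total communication.
   Context: $\mathrm{LCP}(X,Y)$ is the length of the longest common prefix of $X$ and $Y$. In the public-coin model the parties share an infinite string of independent unbiased random bits, and the result must be correct with probability at least a fixed constant greater than $1/2$. *)

(* Defs.v *)
From HB Require Import structures.
From mathcomp Require Import all_boot all_order all_algebra.
From mathcomp Require Import all_classical all_reals all_analysis.
Set Implicit Arguments. Unset Strict Implicit. Unset Printing Implicit Defensive.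
Import Order.TTheory GRing.Theory Num.Theory.

Fixpoint lcp (T : eqType) (X Y : seq T) : nat :=
  match X, Y with
  | x :: X', y :: Y' => if x == y then (lcp X' Y').+1 else 0
  | _, _ => 0
  end.

Definition maxlcp (T : eqType) (A : seq T) (Bs : seq (seq T)) : nat :=
  \max_(B <- Bs) lcp A B.

(* binary logarithm (floor), lg 0 = lg 1 = 0 *)
Definition lg (n : nat) : nat := trunc_log 2 n.

Definition coins := nat -> bool.
Definition transcript := seq (seq bool).

(* Each round, the speaker (determined by the public coins and the transcript)
   sends a bit string computed from its own input, the public coins and the
   transcript; the protocol stops when [halt] (a function of public
   information) holds, and the common answer is [output]. *)
Record protocol (T : Type) := Protocol {
  speaker : coins -> transcript -> bool;  (* true = Alice speaks *)
  alice_msg : seq T -> coins -> transcript -> seq bool;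
  bob_msg : seq (seq T) -> coins -> transcript -> seq bool;
  halt : coins -> transcript -> bool;
  output : coins -> transcript -> nat
}.

Fixpoint run (T : Type) (P : protocol T) (A : seq T) (Bs : seq (seq T))
    (r : coins) (n : nat) : transcript :=
  match n with
  | 0 => [::]
  | n'.+1 =>
    let tr := run P A Bs r n' in
    if halt P r tr then tr
    else rcons tr (if speaker P r tr then alice_msg P A r tr
                   else bob_msg P Bs r tr)
  end.

(* total communication: each message costs its length plus one (delimiter) *)
Definition comm (tr : transcript) : nat := \sum_(m <- tr) (size m).+1.

Definition run_ok (T : Type) (P : protocol T) (A : seq T) (Bs : seq (seq T))
    (r : coins) (t c : nat) (Q : nat -> bool) : Prop :=
  let tr := run P A Bs r t in
  [/\ halt P r tr, comm tr <= c & Q (output P r tr)].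

(* The i-th bit of the binary expansion of x in [0,1): uniform x in [0,1)
   yields i.i.d. unbiased bits (the public random string). *)
Definition bits (R : realType) (x : R) : coins :=
  fun i => odd `|Num.floor (x * 2 ^+ i.+1)|%N.

Local Open Scope classical_set_scope.
Local Open Scope ring_scope.

Definition succ_prob_ge (R : realType) (T : Type) (P : protocol T)
    (A : seq T) (Bs : seq (seq T)) (t c : nat) (Q : nat -> bool) (p : R)
    : Prop :=
  let S : set (measurableTypeR R) :=
    [set x : R | 0 <= x < 1 /\ run_ok P A Bs (bits x) t c Q] in
  measurable S /\ (p%:E <= lebesgue_measure S)%E.

(* Main.v *)
Require Import Defs.
From HB Require Import structures.
From mathcomp Require Import all_boot all_order all_algebra.
From mathcomp Require Import all_classical all_reals all_analysis.
From mathcomp Require Import zify lra.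
Import Order.TTheory GRing.Theory Num.Theory.
Set Implicit Arguments. Unset Strict Implicit. Unset Printing Implicit Defensive.

Definition ccons (b : bool) (r : coins) : coins :=
  fun i => if i is i'.+1 then r i' else b.

Fixpoint E (N : nat) (phi : coins -> nat) : nat :=
  if N is N'.+1 then E N' (fun r => phi (ccons false r)) + E N' (fun r => phi (ccons true r))
  else phi (fun _ => false).

Definition localn (N : nat) (phi : coins -> nat) :=
  forall r r', (forall i, (i < N)%N -> r i = r' i) -> phi r = phi r'.

Definition msb (N F : nat) : coins := fun i => odd (F %/ 2 ^ (N.-1 - i)).

Lemma localn_cons N phi b : localn N.+1 phi -> localn N (fun r => phi (ccons b r)).
Proof.
move=> H r r' Hr; apply: H => -[|i] //= Hi; exact: Hr.
Qed.

Lemma E_sum N phi : localn N phi -> E N phi = \sum_(0 <= F < 2 ^ N) phi (msb N F).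
Proof.
elim: N phi => [|N IH] phi Hl /=.
  rewrite expn0 big_nat1; apply: Hl => i //.
rewrite (IH _ (localn_cons false Hl)) (IH _ (localn_cons true Hl)).
rewrite expnS mul2n -addnn.
rewrite [RHS](big_cat_nat _ (n:=2^N)) ?leq_addr //=.
have -> : \sum_(2^N <= i < 2^N+2^N) phi (msb N.+1 i) = \sum_(0 <= i < 2^N) phi (msb N.+1 (i + 2^N)).
  by rewrite -{1}(add0n (2^N)) big_addn addnK.
congr (_ + _); apply: eq_big_nat => F /andP[_ HF]; apply: Hl => -[|i] Hi /=.
- by rewrite /msb subn0 divn_small.
- by rewrite /msb /=; have -> : N - i.+1 = N.-1 - i by lia.
- rewrite /msb /= subn0.
  have -> : (F + 2^N) %/ 2^N = 1 by rewrite -[X in _ + X]mul1n divnDMl ?expn_gt0 // divn_small.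
  done.
- rewrite /msb /=; have -> : N - i.+1 = N.-1 - i by lia.
  have -> : 2 ^ N = 2 ^ i.+1 * 2 ^ (N.-1 - i).
    by rewrite -expnD; congr (_ ^ _); rewrite ltnS in Hi; lia.
  by rewrite divnDMl ?expn_gt0 // oddD oddX /= addbF.
Qed.

Lemma E_ext N phi psi : (forall r, phi r = psi r) -> E N phi = E N psi.
Proof. by move=> H; congr E; apply: funext. Qed.

Lemma E_le N phi psi : (forall r, phi r <= psi r) -> E N phi <= E N psi.
Proof.
elim: N phi psi => [|N IH] phi psi H /=; first exact: H.
by apply: leq_add; apply: IH.
Qed.

Lemma E_add N phi psi : E N (fun r => phi r + psi r) = E N phi + E N psi.
Proof.
elim: N phi psi => [|N IH] phi psi //=.
by rewrite IH IH addnACA.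
Qed.

Lemma E_const N c : E N (fun _ => c) = c * 2 ^ N.
Proof.
elim: N => [|N IH] /=; first by rewrite muln1.
by rewrite IH expnS; lia.
Qed.

Section SecM2.

Local Open Scope ring_scope.

Lemma bits_msb (R : realType) N M (x : R) i :
  (M < 2 ^ N)%N -> M%:R <= x * 2 ^+ N < M.+1%:R -> (i < N)%N ->
  bits x i = msb N M i.
Proof.
move=> HM /andP[hx1 hx2] Hi.
set d := (2 ^ (N.-1 - i))%N.
have dpos : (0 < d)%N by rewrite expn_gt0.
have hN : (2 ^ N = 2 ^ i.+1 * d)%N by rewrite /d -expnD; congr (expn _ _); lia.
have hNR : (2 : R) ^+ N = 2 ^+ i.+1 * d%:R by rewrite -natrX hN natrM natrX.
set q := (M %/ d)%N.
have hq1 : (q * d <= M)%N by rewrite leq_trunc_div.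
have hq2 : (M < q.+1 * d)%N by rewrite ltn_ceil.
have dR : (0 : R) < d%:R by rewrite ltr0n.
rewrite /bits /msb -/d.
have -> : Num.floor (x * 2 ^+ i.+1) = q%:Z.
  apply: floor_def; apply/andP; split.
  - rewrite -(ler_pM2r dR) -mulrA -hNR.
    apply: le_trans hx1; rewrite -pmulrn -natrM ler_nat //.
  - rewrite -(ltr_pM2r dR) -mulrA -hNR.
    apply: lt_le_trans hx2 _; have -> : (q%:Z + 1)%R = (q.+1)%:Z by rewrite -addn1 PoszD.
    rewrite -pmulrn.
    by rewrite -natrM ler_nat.
by rewrite absz_nat.
Qed.

Local Open Scope classical_set_scope.

Definition localb (N : nat) (Q : coins -> bool) :=
  forall r r', (forall i, (i < N)%N -> r i = r' i) -> Q r = Q r'.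

Lemma localb_n N Q : localb N Q -> localn N (fun r => Q r).
Proof. by move=> H r r' Hr; rewrite (H r r'). Qed.

Lemma measure_prefix (R : realType) N (Q : coins -> bool) M :
  localb N Q -> (M <= 2 ^ N)%N ->
  let S : set (measurableTypeR R) :=
    [set x : R | 0 <= x /\ x * 2 ^+ N < M%:R /\ Q (bits x)] in
  measurable S /\
  lebesgue_measure S = ((\sum_(0 <= F < M) Q (msb N F))%:R / 2 ^+ N)%:E.
Proof.
move=> HQ; elim: M => [|M IH] HM /=.
  have -> : [set x : R | 0 <= x /\ x * 2 ^+ N < 0%:R /\ Q (bits x)] = set0.
    apply/seteqP; split => x //= [x0 [xN _]].
    by move: xN; rewrite ltNge mulr_ge0 // exprn_ge0.
  by rewrite big_geq // mul0r measure0.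
have [IH1 IH2] := IH (ltnW HM).
set I : set (measurableTypeR R) :=
  if Q (msb N M) then `[M%:R / 2 ^+ N, M.+1%:R / 2 ^+ N[%classic else set0.
have p2 : (0 : R) < 2 ^+ N by rewrite exprn_gt0.
have mI : measurable I by rewrite /I; case: ifP => _ //; exact: measurable_itv.
have -> : [set x : R | 0 <= x /\ x * 2 ^+ N < M.+1%:R /\ Q (bits x)] =
    [set x : R | 0 <= x /\ x * 2 ^+ N < M%:R /\ Q (bits x)] `|` I.
  apply/seteqP; split => x /=.
  - move=> [x0 [xN Qx]].
    case: (ltP (x * 2 ^+ N) M%:R) => hxM; first by left.
    right; rewrite /I.
    have Hb : Q (bits x) = Q (msb N M).
      apply: HQ => i Hi; apply: bits_msb => //; by rewrite hxM.
    rewrite -Hb Qx /= in_itv /= ler_pdivrMr // ltr_pdivlMr // hxM.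
    by rewrite xN.
  - case=> [[x0 [xN Qx]]|].
      by split => //; split => //; apply: lt_trans xN _; rewrite ltr_nat.
    rewrite /I; case: ifP => HQM // /=; rewrite in_itv /= => /andP[h1 h2].
    move: h1 h2; rewrite ler_pdivrMr // ltr_pdivlMr // => h1 h2.
    have x0 : 0 <= x.
      by rewrite -(pmulr_lge0 _ p2); apply: le_trans h1.
    split => //; split => //.
    rewrite (HQ (bits x) (msb N M)) // => i Hi; apply: bits_msb => //; by rewrite h1.
split; first exact: measurableU.
rewrite measureU //; last first.
  apply/seteqP; split => x //= [[x0 [xN _]]]; rewrite /I; case: ifP => // _.
  by rewrite /= in_itv /= ler_pdivrMr // leNgt xN.
set S0 := [set x : R | 0 <= x /\ x * 2 ^+ N < M%:R /\ Q (bits x)] in IH2 *.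
rewrite -[LHS]/(lebesgue_measure S0 + lebesgue_measure I)%E.
rewrite IH2 big_nat_recr //= natrD mulrDl EFinD; congr (_ + _)%E.
rewrite /I; case: ifP => HQM /=; last by rewrite measure0 mul0r.
rewrite lebesgue_measure_itv /= lte_fin ltr_pM2r ?invr_gt0 // ltr_nat ltnSn.
by rewrite -EFinB -mulrBl -natrB // subSnn mul1r.
Qed.


Lemma measure_local (R : realType) N (Q : coins -> bool) :
  localb N Q ->
  let S : set (measurableTypeR R) := [set x : R | 0 <= x < 1 /\ Q (bits x)] in
  measurable S /\
  lebesgue_measure S = ((E N (fun r => Q r))%:R / 2 ^+ N)%:E.
Proof.
move=> HQ /=; have [] := measure_prefix R (M := 2 ^ N) HQ (leqnn _).
have -> : [set x : R | 0 <= x /\ x * 2 ^+ N < (2 ^ N)%:R /\ Q (bits x)] =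
          [set x : R | 0 <= x < 1 /\ Q (bits x)].
  apply/seteqP; split => x /=.
  - case=> x0 [xN Qx]; split => //; rewrite x0 /=; rewrite natrX in xN.
    by rewrite -(ltr_pM2r (exprn_gt0 N (ltr0Sn R 1))) mul1r.
  - move=> [/andP[x0 x1] Qx]; split; first exact: x0.
    split; last exact: Qx.
    by rewrite natrX gtr_pMl ?exprn_gt0.
move=> mS ->; split => //; rewrite E_sum //; exact: localb_n.
Qed.

End SecM2.

Definition shiftc (m : nat) (r : coins) : coins := fun i => r (i + m).

Fixpoint Hf (m f n : nat) (r : coins) (t : nat) : bool :=
  if f is f'.+1 then (odd n && r t) (+) Hf m f' n./2 (shiftc m r) t else false.

Definition app (a : nat) (r0 r1 : coins) : coins :=
  fun i => if i < a then r0 i else r1 (i - a).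

Lemma E_app a b phi :
  E (a + b) phi = E a (fun r0 => E b (fun r1 => phi (app a r0 r1))).
Proof.
elim: a phi => [|a IH] phi /=.
  congr E; apply: funext => r1; congr phi; apply: funext => i; by rewrite /app subn0.
rewrite !IH; congr (E _ _ + E _ _); apply: funext => r0; congr E; apply: funext => r1;
  congr phi; apply: funext => -[|i] //=; rewrite /app /= ltnS subSS //.
Qed.

Lemma E_mulr N phi c : E N (fun r => phi r * c) = E N phi * c.
Proof.
elim: N phi => [|N IH] phi //=; by rewrite !IH mulnDl.
Qed.

Lemma E_all_eq m (e : nat -> bool) :
  E m (fun r => all (fun t => r t == e t) (iota 0 m)) = 1.
Proof.
elim: m e => [|m IH] e //=.
have H b r : nat_of_bool (all (fun t => ccons b r t == e t) (iota 0 m.+1)) =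
           (b == e 0) * all (fun t => r t == e t.+1) (iota 0 m).
  rewrite /= -(addn0 1) iotaDl all_map.
  have -> : all (preim (addn 1) (fun t => ccons b r t == e t)) (iota 0 m) =
            all (fun t => r t == e t.+1) (iota 0 m).
    by apply: eq_all => t /=; rewrite add1n.
  by case: (b == e 0); case: (all _ _).
rewrite (E_ext _ (H false)) (E_ext _ (H true)).
rewrite -(E_ext _ (fun r => mulnC _ _)) E_mulr -(E_ext _ (fun r => mulnC _ _)) E_mulr IH.
by case: (e 0).
Qed.

Lemma Hf_shift_app m f n r0 r1 :
  Hf m f n (shiftc m (app m r0 r1)) = Hf m f n r1.
Proof.
congr Hf; apply: funext => i; rewrite /shiftc /app.
by rewrite ltnNge leq_addl /= addnK.
Qed.

Lemma Hf_app m f n r0 r1 t : t < m ->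
  Hf m f.+1 n (app m r0 r1) t = (odd n && r0 t) (+) Hf m f n./2 r1 t.
Proof. by move=> Ht /=; rewrite Hf_shift_app /app Ht. Qed.

Lemma coll_bound m f u v (e : nat -> bool) :
  u != v -> u < 2 ^ f -> v < 2 ^ f ->
  E (m * f) (fun r => all (fun t => (Hf m f u r t (+) Hf m f v r t) == e t) (iota 0 m))
    <= 2 ^ (m * f.-1).
Proof.
elim: f u v e => [|f IH] u v e Huv Hu Hv.
  by move: Huv Hu Hv; rewrite expn0; case: u => // ; case: v.
rewrite mulnS E_app /=.
have Hphi : forall r0, (fun r1 => nat_of_bool (all (fun t => (Hf m f.+1 u (app m r0 r1) t
      (+) Hf m f.+1 v (app m r0 r1) t) == e t) (iota 0 m))) =
    (fun r1 => nat_of_bool (all (fun t => (Hf m f u./2 r1 t (+) Hf m f v./2 r1 t) ==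
         (e t (+) ((odd u (+) odd v) && r0 t))) (iota 0 m))).
  move=> r0; apply: funext => r1; congr nat_of_bool; apply: eq_in_all => t.
  rewrite mem_iota add0n => /andP[_ Ht]; rewrite !Hf_app //.
  by case: (odd u); case: (odd v); case: (r0 t); case: (Hf _ _ _ _ _); case: (Hf _ _ _ _ _);
     case: (e t).
under E_ext => r0 do rewrite Hphi.
have Hu2 : u./2 < 2 ^ f by rewrite -ltn_double -!muln2 -expnSr; apply: leq_ltn_trans Hu; rewrite muln2 -{2}(odd_double_half u) leq_addl.
have Hv2 : v./2 < 2 ^ f by rewrite -ltn_double -!muln2 -expnSr; apply: leq_ltn_trans Hv; rewrite muln2 -{2}(odd_double_half v) leq_addl.
case: (eqVneq u./2 v./2) => Huv2.
- have Hodd : odd u (+) odd v.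
    apply: contraNT Huv => H; apply/eqP.
    rewrite -(odd_double_half u) -(odd_double_half v) Huv2; congr (_ + _).
    by move: H; case: (odd u); case: (odd v).
  rewrite Huv2 Hodd.
  have HH : forall r0, E (m * f) (fun r1 => nat_of_bool (all (fun t => Hf m f v./2 r1 t (+) Hf m f v./2 r1 t ==
          e t (+) true && r0 t) (iota 0 m))) = all (fun t => r0 t == e t) (iota 0 m) * 2 ^ (m * f).
    move=> r0; rewrite -E_const; apply: E_ext => r1; congr nat_of_bool; apply: eq_all => t.
    by rewrite addbb; case: (e t); case: (r0 t).
  under E_ext => r0 do rewrite HH.
  by rewrite E_mulr E_all_eq mul1n.
- clear Hphi; case: f IH Hu Hv Hu2 Hv2 => [|f] IH Hu Hv Hu2 Hv2.
    by move: Huv2 Hu2 Hv2; rewrite expn0; case: (u./2) => //; case: (v./2).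
  apply: leq_trans (E_le _ (psi := fun _ => 2 ^ (m * f)) _) _.
    by move=> r0; apply: IH.
  by rewrite E_const -expnD /= mulnS addnC.
Qed.

Lemma Hf_0 m f r t : Hf m f 0 r t = false.
Proof. by elim: f r => [|f IH] r //=; rewrite IH. Qed.

Lemma Hf_fuel m f f' n r t : n < 2 ^ f -> n < 2 ^ f' -> Hf m f n r t = Hf m f' n r t.
Proof.
elim: f f' n r => [|f IH] f' n r.
  by rewrite expn0 ltnS leqn0 => /eqP -> _; rewrite !Hf_0.
case: (posnP n) => [-> _ _|n0 Hn Hn']; first by rewrite !Hf_0.
case: f' Hn' => [|f'] Hn'; first by move: Hn'; rewrite expn0 ltnS leqn0 => /eqP H; move: n0; rewrite H.
have h2 k : n < 2 ^ k.+1 -> n./2 < 2 ^ k.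
  by move=> Hk; rewrite -ltn_double -!muln2 -expnSr; apply: leq_ltn_trans Hk; rewrite muln2 -{2}(odd_double_half n) leq_addl.
by rewrite /= (IH f') // ?h2.
Qed.

Lemma Hf_local m f n r r' t : t < m -> (forall i, i < m * f -> r i = r' i) ->
  Hf m f n r t = Hf m f n r' t.
Proof.
elim: f n r r' => [|f IH] n r r' Ht Hr //=.
rewrite Hr; last by apply: leq_trans Ht _; rewrite mulnS leq_addr.
congr (_ (+) _); apply: IH => // i Hi; rewrite /shiftc Hr //.
by rewrite mulnS; lia.
Qed.

Lemma E_has (V : Type) N (P : coins -> V -> bool) (s : seq V) :
  E N (fun r => has (P r) s) <= \sum_(v <- s) E N (fun r => P r v).
Proof.
elim: s => [|v s IH] /=.
  by rewrite big_nil E_const.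
rewrite big_cons; apply: leq_trans (leq_add (leqnn _) IH); rewrite -E_add.
apply: E_le => r; by case: (P r v); case: (has _ _).
Qed.

Section SecM4.

Definition runb (T : Type) (P : protocol T) (A : seq T) (Bs : seq (seq T))
    (r : coins) (t c : nat) (Q : nat -> bool) : bool :=
  let tr := run P A Bs r t in
  [&& halt P r tr, comm tr <= c & Q (output P r tr)].

Lemma run_frozen (T : Type) (P : protocol T) A Bs r n d :
  halt P r (run P A Bs r n) -> run P A Bs r (n + d) = run P A Bs r n.
Proof.
move=> H; elim: d => [|d IH]; first by rewrite addn0.
by rewrite addnS /= IH H.
Qed.

Local Open Scope ring_scope.
Local Open Scope classical_set_scope.

Lemma succ_of_E (R : realType) (T : Type) (P : protocol T) A Bs t c Q N :
  localb N (fun r => runb P A Bs r t c Q) ->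
  (3 * 2 ^ N <= 4 * E N (fun r => runb P A Bs r t c Q))%N ->
  succ_prob_ge P A Bs t c Q (3 / 4 : R).
Proof.
move=> Hl Hle; rewrite /succ_prob_ge.
have -> : [set x : R | 0 <= x < 1 /\ run_ok P A Bs (bits x) t c Q] =
          [set x : R | 0 <= x < 1 /\ runb P A Bs (bits x) t c Q].
  apply/seteqP; split => x /= [H1 H2]; split => //.
  - by case: H2 => *; apply/and3P.
  - by case/and3P: H2.
have [mS ->] := measure_local R Hl.
split => //; rewrite lee_fin ler_pdivlMr ?exprn_gt0 //.
rewrite mulrAC ler_pdivrMr // -natrX -!natrM ler_nat.
by rewrite [X in (_ <= X)%N]mulnC.
Qed.

End SecM4.

Fixpoint encf (f n : nat) : seq bool :=
  if f is f'.+1 then (if n == 0 then [::] else odd n :: encf f' n./2) else [::].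
Definition enc (n : nat) := encf n n.
Definition dec (s : seq bool) : nat := foldr (fun (b : bool) (acc : nat) => (b + acc.*2)%N) 0 s.

Lemma half_lt n k : n < 2 ^ k.+1 -> n./2 < 2 ^ k.
Proof.
by move=> Hk; rewrite -ltn_double -!muln2 -expnSr; apply: leq_ltn_trans Hk; rewrite muln2 -{2}(odd_double_half n) leq_addl.
Qed.

Lemma dec_encf f n : n < 2 ^ f -> dec (encf f n) = n.
Proof.
elim: f n => [|f IH] n /=; first by rewrite expn0 ltnS leqn0 => /eqP ->.
case: eqP => [-> //|_ Hn] /=.
by rewrite IH ?half_lt // odd_double_half.
Qed.

Lemma dec_enc n : dec (enc n) = n.
Proof. by apply: dec_encf; rewrite ltn_expl. Qed.

Lemma size_encf0 f : size (encf f 0) = 0.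
Proof. by case: f. Qed.

Lemma size_encf f n : 0 < n -> 2 ^ size (encf f n) <= n.*2.
Proof.
elim: f n => [|f IH] n n0 /=; first by rewrite -muln2; lia.
case: eqP => [H|_] /=; first by move: n0; rewrite H.
case: (posnP n./2) => [H|H].
  by rewrite H size_encf0 expn1 -muln2; lia.
rewrite expnS; apply: leq_trans (leq_mul (leqnn 2) (IH _ H)) _.
by rewrite -{2}(odd_double_half n) -!muln2; lia.
Qed.

Lemma size_enc n : size (enc n) <= (lg n).+1.
Proof.
case: (posnP n) => [->|n0]; first by [].
have H := size_encf n n0; rewrite /lg.
case E : (size (enc n)) => [|s] //; rewrite ltnS; apply: trunc_log_max => //.
by rewrite -leq_double -!muln2 -expnSr; rewrite /enc E in H; rewrite muln2.
Qed.

Definition vA (n : nat) := if n <= 1 then n else (lg (lg n)).+2.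
Definition out (w : nat) := if w <= 1 then w else 2 ^ (2 ^ w.-1).

Definition P2 (T : Type) : protocol T :=
  Protocol (fun _ _ => true) (fun A _ _ => enc (vA (size A))) (fun _ _ _ => [::])
    (fun _ tr => size tr != 0) (fun _ tr => out (dec (head [::] tr))).

Lemma lcp_size (T : eqType) (X Y : seq T) : lcp X Y <= size X.
Proof. elim: X Y => [|x X IH] [|y Y] //=; case: eqP => // _; exact: IH. Qed.

Lemma maxlcp_size (T : eqType) (A : seq T) Bs : maxlcp A Bs <= size A.
Proof.
rewrite /maxlcp; elim: Bs => [|B Bs IH]; first by rewrite big_nil.
by rewrite big_cons geq_max lcp_size IH.
Qed.

Lemma lg_add2 k : lg k.+2 <= (lg k).+1.
Proof.
rewrite /lg.
have h1 : 2 ^ (trunc_log 2 k.+2) <= k.+2 by apply: trunc_logP.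
have h2 : k < 2 ^ (trunc_log 2 k).+1 by apply: trunc_log_ltn.
rewrite leqNgt; apply/negP => H.
have h3 : 2 ^ (trunc_log 2 k).+2 <= 2 ^ (trunc_log 2 k.+2) by rewrite leq_exp2l.
have h4 : 1 < 2 ^ (trunc_log 2 k).+1 by rewrite expnS; have := expn_gt0 2 (trunc_log 2 k); lia.
move: h1 h2 h3 h4; rewrite [2 ^ (trunc_log 2 k).+2]expnS; lia.
Qed.

Lemma out_bounds n : 2 <= n -> n <= out (vA n) <= n ^ 2.
Proof.
move=> Hn; rewrite /vA /out.
have -> : (n <= 1) = false by apply/negbTE; rewrite -ltnNge.
rewrite /=.
set m := lg n; set k := lg m.
have m1 : 1 <= m by rewrite /m /lg; apply: trunc_log_max => //; rewrite expn1.
have Hm1 : 2 ^ m <= n by apply: trunc_logP => //; lia.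
have Hm2 : n < 2 ^ m.+1 by apply: trunc_log_ltn.
have Hk1 : 2 ^ k <= m by apply: trunc_logP.
have Hk2 : m < 2 ^ k.+1 by apply: trunc_log_ltn.
apply/andP; split.
  apply: ltnW; apply: leq_trans Hm2 _; by rewrite leq_exp2l.
apply: (@leq_trans (2 ^ (m * 2))).
  by rewrite leq_exp2l // expnS; lia.
by rewrite expnM leq_exp2r.
Qed.

Lemma run_P2 (T : Type) (A : seq T) Bs r :
  run (P2 T) A Bs r 3 = [:: enc (vA (size A))].
Proof. by []. Qed.

Lemma comm1 (s : seq bool) : comm [:: s] = (size s).+1.
Proof. by rewrite /comm big_cons big_nil addn0. Qed.

Lemma P2_ok (T : eqType) (A : seq T) Bs r :
  runb (P2 T) A Bs r 3 (3 * (lg (lg (lg (size A)))).+1)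
    (fun l' => (maxlcp A Bs <= l' <= (size A) ^ 2)%N).
Proof.
rewrite /runb run_P2 /= comm1 dec_enc.
have hl := maxlcp_size A Bs.
case: (leqP (size A) 1) => HA.
  rewrite /vA /out HA /= HA hl /=; apply/andP; split.
    by move: HA; case: (size A) => [|[|]].
  by case: (size A) HA => [|[|]].
case/andP: (out_bounds HA) => o1 o2.
rewrite (leq_trans hl o1) o2 andbT /=.
rewrite andbT /vA.
have -> : (size A <= 1) = false by apply/negbTE; rewrite -ltnNge.
apply: leq_ltn_trans (size_enc _) _.
have := lg_add2 (lg (lg (size A))); lia.
Qed.

Section SecM6.
Local Open Scope ring_scope.

Lemma half_lt34 (R : realType) : 1 / 2 < (3 / 4 : R).
Proof. lra. Qed.

Lemma part2 (R : realType) (T : countType) :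
  (exists (p : R) (C : nat), 1 / 2 < p /\
    exists P : protocol T, forall (A : seq T) (Bs : seq (seq T)),
      (0 < size Bs)%N ->
      let l := maxlcp A Bs in
      succ_prob_ge P A Bs C (C * (lg (lg (lg (size A)))).+1)
        (fun l' => (l <= l' <= (size A) ^ 2)%N) p).
Proof.
exists (3 / 4), 3%N; split; first exact: half_lt34.
exists (P2 T) => A Bs _ l.
apply: (@succ_of_E R T (P2 T) A Bs _ _ _ 0).
  by move=> r r' _; rewrite !P2_ok.
by rewrite /= P2_ok.
Qed.

End SecM6.

Definition Lj (j : nat) : nat := if j is j'.+1 then 2 ^ (2 ^ j') else 1.
Definition Hh (m n : nat) (r : coins) (t : nat) := Hf m n n r t.
Definition hashv (m n : nat) (r : coins) : seq bool := [seq Hh m n r t | t <- iota 0 m].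
Definition m0 (k : nat) := (lg k).+3.

Lemma run_S (T : Type) (P : protocol T) A Bs r n :
  run P A Bs r n.+1 =
  if halt P r (run P A Bs r n) then run P A Bs r n
  else rcons (run P A Bs r n) (if speaker P r (run P A Bs r n)
       then alice_msg P A r (run P A Bs r n) else bob_msg P Bs r (run P A Bs r n)).
Proof. by []. Qed.

Lemma lcp_take (T : eqType) (X Y : seq T) L : L <= lcp X Y -> take L X = take L Y.
Proof.
elim: X Y L => [|x X IH] [|y Y] [|L] //=; case: eqP => // -> H; congr cons; exact: IH.
Qed.

Lemma take_lcp (T : eqType) (X Y : seq T) L :
  L <= size X -> take L X = take L Y -> L <= lcp X Y.
Proof.
elim: X Y L => [|x X IH] [|y Y] [|L] //= HL [-> H]; rewrite eqxx ltnS; exact: IH.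
Qed.

Lemma maxlcp_ge (T : eqType) (A : seq T) Bs B : B \in Bs -> lcp A B <= maxlcp A Bs.
Proof.
rewrite /maxlcp; elim: Bs => [|B' Bs IH] //; rewrite inE big_cons => /orP[/eqP->|H].
  exact: leq_maxl.
exact: leq_trans (IH H) (leq_maxr _ _).
Qed.

Lemma maxlcp_ex (T : eqType) (A : seq T) Bs L :
  0 < L -> L <= maxlcp A Bs -> exists2 B, B \in Bs & L <= lcp A B.
Proof.
rewrite /maxlcp; elim: Bs => [|B Bs IH] L0; first by rewrite big_nil leqNgt L0.
rewrite big_cons leq_max => /orP[H|H]; first by exists B => //; rewrite inE eqxx.
by have [B' HB' HL] := IH L0 H; exists B' => //; rewrite inE HB' orbT.
Qed.

Lemma comm_cons x s : comm (x :: s) = (size x).+1 + comm s.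
Proof. by rewrite /comm big_cons. Qed.

Lemma comm_rcons s x : comm (rcons s x) = comm s + (size x).+1.
Proof. by rewrite /comm -cats1 big_cat big_seq1. Qed.

Lemma size_hashv m n r : size (hashv m n r) = m.
Proof. by rewrite size_map size_iota. Qed.

Section P1.
Variable T : countType.

Definition amsg (A : seq T) (m j : nat) (r : coins) : seq bool :=
  if Lj j <= size A then hashv m (pickle (take (Lj j) A)) r else [::].
Definition bans (Bs : seq (seq T)) (m j : nat) (r : coins) (a : seq bool) : bool :=
  (a != [::]) && has (fun B => hashv m (pickle (take (Lj j) B)) r == a) Bs.

Definition P1 : protocol T := Protocol
  (fun _ tr => odd (size tr))
  (fun A r tr => amsg A (size (head [::] tr)) (size tr)./2 r)
  (fun Bs r tr => if size tr == 0 then nseq (m0 (size Bs)) true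
                  else [:: bans Bs (size (head [::] tr)) ((size tr)./2.-1) r (last [::] tr)])
  (fun _ tr => odd (size tr) && (last [::] tr == [:: false]))
  (fun _ tr => (Lj ((size tr)./2.-1)).-1).

Variables (A : seq T) (Bs : seq (seq T)).
Let k := size Bs.
Let bob0 := nseq (m0 k) true.

Fixpoint body (j : nat) (r : coins) : transcript :=
  if j is j'.+1 then rcons (rcons (body j' r) (amsg A (m0 k) j' r)) [:: true] else [::].

Lemma size_body j r : size (body j r) = j.*2.
Proof. by elim: j => [|j IH] //=; rewrite !size_rcons IH doubleS. Qed.

Lemma last_body j r : last bob0 (body j r) != [:: false].
Proof.
case: j => [|j] /=; last by rewrite last_rcons.
by rewrite /bob0 /m0.
Qed.

Lemma run_step j r : run P1 A Bs r j.*2.+1 = bob0 :: body j r ->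
  run P1 A Bs r j.*2.+3 =
    bob0 :: rcons (rcons (body j r) (amsg A (m0 k) j r))
                  [:: bans Bs (m0 k) j r (amsg A (m0 k) j r)].
Proof.
move=> H.
rewrite run_S [run _ _ _ _ j.*2.+2]run_S H /=.
rewrite !size_body !odd_double /= (negbTE (last_body j r)) /=.
rewrite !size_rcons !size_body /= odd_double /= last_rcons !size_nseq.
by rewrite uphalf_double half_double.
Qed.

Let l := maxlcp A Bs.

Lemma size_amsg j r : size (amsg A (m0 k) j r) <= m0 k.
Proof. by rewrite /amsg; case: ifP => _ //; rewrite size_hashv. Qed.

Lemma bans_true j r : Lj j <= l -> bans Bs (m0 k) j r (amsg A (m0 k) j r).
Proof.
move=> Hl.
have HA : Lj j <= size A by apply: leq_trans Hl (maxlcp_size _ _).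
have L0 : 0 < Lj j by case: j {Hl HA} => //= j; rewrite expn_gt0.
have [B HB HBl] := maxlcp_ex L0 Hl.
rewrite /bans /amsg HA -size_eq0 size_hashv /=.
apply/hasP; exists B => //; by rewrite (lcp_take HBl).
Qed.

Lemma run_pre j r : (forall i, i < j -> Lj i <= l) ->
  run P1 A Bs r j.*2.+1 = bob0 :: body j r.
Proof.
elim: j => [|j IH] Hj; first by [].
rewrite doubleS (run_step (IH _)); last by move=> i Hi; apply: Hj; rewrite ltnS ltnW.
by rewrite bans_true //; apply: Hj.
Qed.

Lemma comm_body j r : comm (body j r) <= j * (m0 k).+3.
Proof.
elim: j => [|j IH]; first by rewrite /comm big_nil.
have -> : body j.+1 r = rcons (rcons (body j r) (amsg A (m0 k) j r)) [:: true] by [].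
rewrite !comm_rcons mulSn.
have := size_amsg j r; rewrite /=; lia.
Qed.

Definition Fb : nat := (maxn (\max_(i < (size A).+1) pickle (take i A))
   (\max_(B <- Bs) \max_(i < (size B).+1) pickle (take i B))).+1.

Lemma take_ex (X : seq T) L : exists i : 'I_(size X).+1, take L X = take i X.
Proof.
case: (leqP L (size X)) => HL.
  by exists (Ordinal (n := (size X).+1) (m := L) HL).
exists ord_max; rewrite /= take_size take_oversize //; exact: ltnW.
Qed.

Lemma pickA L : pickle (take L A) < Fb.
Proof.
have [i ->] := take_ex A L; rewrite ltnS; apply: leq_trans (leq_maxl _ _).
exact: (leq_bigmax (F := fun i : 'I_(size A).+1 => pickle (take i A)) i).
Qed.

Lemma pickB B L : B \in Bs -> pickle (take L B) < Fb.
Proof.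
move=> HB; have [i ->] := take_ex B L; rewrite ltnS; apply: leq_trans (leq_maxr _ _).
apply: leq_trans (leq_bigmax_seq _ HB (isT : xpredT B)).
exact: (leq_bigmax (F := fun i : 'I_(size B).+1 => pickle (take i B)) i).
Qed.

Lemma hashv_local m n r r' : m <= m0 k -> n < Fb ->
  (forall i, i < m0 k * Fb -> r i = r' i) -> hashv m n r = hashv m n r'.
Proof.
move=> Hm Hn Hr; apply/eq_in_map => t; rewrite mem_iota add0n => /andP[_ Ht].
apply: Hf_local => // i Hi; apply: Hr; apply: leq_trans Hi _.
by apply: leq_mul => //; apply: ltnW.
Qed.

Lemma run_inv r n : run P1 A Bs r n = [::] \/ head [::] (run P1 A Bs r n) = bob0.
Proof.
elim: n => [|n IH]; first by left.
rewrite run_S; case: ifP => _; first exact: IH.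
right; case: IH => [->|]; first by [].
by case: (run P1 A Bs r n) => [|x s] //=.
Qed.

Lemma run_local r r' n : (forall i, i < m0 k * Fb -> r i = r' i) ->
  run P1 A Bs r n = run P1 A Bs r' n.
Proof.
move=> Hr; elim: n => [|n IH] //.
rewrite !run_S -IH.
have Hm : size (head [::] (run P1 A Bs r n)) <= m0 k.
  by case: (run_inv r n) => ->; rewrite ?size_nseq.
set tr := run P1 A Bs r n in Hm *.
rewrite /=; case: ifP => // _; congr rcons; case: ifP => _.
  rewrite /amsg; case: ifP => // _; apply: hashv_local => //; exact: pickA.
case: ifP => // _; congr [:: _]; rewrite /bans; congr andb.
apply: eq_in_has => B HB; by rewrite (@hashv_local _ _ r r' Hm (pickB _ HB) Hr).
Qed.

End P1.

Lemma Lj_gt l : l < Lj l.+1.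
Proof.
rewrite /=; apply: leq_trans (ltn_expl l (isT : 1 < 2)) _.
by rewrite leq_exp2l // ltnW // ltn_expl.
Qed.

Lemma jbound l j : (forall i, i < j -> Lj i <= l) -> j <= (lg (lg l)).+2.
Proof.
case: j => [|[|[|i]]] // H.
have H2 : 2 ^ (2 ^ i.+1) <= l by apply: (H i.+2).
have H3 : 2 ^ i.+1 <= lg l by apply: trunc_log_max.
have H4 : i.+1 <= lg (lg l) by apply: trunc_log_max.
by rewrite !ltnS.
Qed.

Lemma out_le l j : l < Lj j -> (forall i, i < j -> Lj i <= l) -> (Lj j).-1 <= l ^ 2.
Proof.
case: j => [|j] // Hl H.
have Hj := H j (ltnSn j).
apply: (@leq_trans (Lj j ^ 2)); last by rewrite leq_exp2r.
case: j Hl H Hj => [|j] //= Hl H Hj.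
by rewrite -expnM -expnSr leq_pred.
Qed.

Lemma hashv_eq m f v u r : v < 2 ^ f -> u < 2 ^ f ->
  (hashv m v r == hashv m u r) =
  all (fun t => (Hf m f v r t (+) Hf m f u r t) == false) (iota 0 m).
Proof.
move=> Hv Hu; rewrite /hashv; elim: (iota 0 m) => [|t s IH] //=.
rewrite eqseq_cons IH /Hh (@Hf_fuel m v f v r t (ltn_expl _ (isT : 1 < 2)) Hv).
rewrite (@Hf_fuel m u f u r t (ltn_expl _ (isT : 1 < 2)) Hu).
by case: (Hf m f v r t); case: (Hf m f u r t).
Qed.

Lemma sum_le_const (V : eqType) (s : seq V) (f : V -> nat) c :
  (forall v, v \in s -> f v <= c) -> \sum_(v <- s) f v <= size s * c.
Proof.
elim: s => [|v s IH] H; first by rewrite big_nil.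
rewrite big_cons mulSn leq_add //; first by apply: H; rewrite inE eqxx.
by apply: IH => w Hw; apply: H; rewrite inE Hw orbT.
Qed.

Section Inst.
Variables (T : countType) (A : seq T) (Bs : seq (seq T)).
Hypothesis HBs : 0 < size Bs.

Lemma inst_good (j : nat) (r : coins) :
  let l := maxlcp A Bs in let m := m0 (size Bs) in
  l < Lj j -> (forall i, i < j -> Lj i <= l) ->
  ~~ bans Bs m j r (amsg A m j r) ->
  runb (P1 T) A Bs r (24 * (lg (lg l)).+1) (24 * (lg (lg l)).+1 * (lg (size Bs)).+1)
    (fun l' => l <= l' <= l ^ 2).
Proof.
move=> l m Hj Hpre Gr.
have H3 := run_step (run_pre r Hpre).
rewrite (negbTE Gr) in H3.
have Hhalt : halt (P1 T) r (run (P1 T) A Bs r j.*2.+3).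
  by rewrite H3 /= !size_rcons size_body !oddS odd_double last_rcons.
have Hjb := jbound Hpre.
have Ht : j.*2.+3 <= 24 * (lg (lg l)).+1 by rewrite -addnn; lia.
rewrite /runb.
have -> : run (P1 T) A Bs r (24 * (lg (lg l)).+1) = run (P1 T) A Bs r j.*2.+3.
  by rewrite -(subnKC Ht) run_frozen.
apply/and3P; split; first exact: Hhalt.
  rewrite H3 comm_cons !comm_rcons size_nseq.
  have := comm_body A Bs j r; have := size_amsg A Bs j r.
  rewrite /m0 /=; nia.
rewrite H3 /= !size_rcons size_body -doubleS uphalf_double /=.
apply/andP; split; last exact: out_le.
by move: Hj; case: (Lj j).
Qed.

Lemma inst_count (j : nat) :
  let l := maxlcp A Bs in let m := m0 (size Bs) in
  l < Lj j ->
  3 * 2 ^ (m * Fb A Bs) <= 4 * E (m * Fb A Bs) (fun r => ~~ bans Bs m j r (amsg A m j r)).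
Proof.
move=> l m Hj.
set F := Fb A Bs; set N := m * F.
have F0 : 0 < F by [].
have Hbad : E N (fun r => bans Bs m j r (amsg A m j r)) <= size Bs * 2 ^ (m * F.-1).
  case HA: (Lj j <= size A); last first.
    apply: leq_trans (E_le _ (psi := fun _ => 0) _) _; first by move=> r; rewrite /bans /amsg HA eqxx.
    by rewrite E_const.
  set u := pickle (take (Lj j) A).
  apply: leq_trans (E_le _ (psi := fun r => has (fun B => hashv m (pickle (take (Lj j) B)) r == hashv m u r) Bs) _) _.
    by move=> r; rewrite /bans /amsg HA; case: (_ != _); case: (has _ _).
  apply: leq_trans (E_has _ _ _) _.
  apply: sum_le_const => B HB.
  have Hu : u < 2 ^ F.
    have h1 := pickA A Bs (Lj j); have h2 := @ltn_expl 2 F isT.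
    exact: ltn_trans h1 h2.
  have Hv : pickle (take (Lj j) B) < 2 ^ F.
    have h1 := pickB A (Lj j) HB; have h2 := @ltn_expl 2 F isT.
    exact: ltn_trans h1 h2.
  rewrite (E_ext _ (fun r => f_equal nat_of_bool (hashv_eq m r Hv Hu))).
  apply: coll_bound => //.
  apply/negP => /eqP /(pcan_inj (@pickleK _)) Heq.
  have := take_lcp HA (esym Heq); have := maxlcp_ge A HB; rewrite -/l; lia.
have Hsum : E N (fun r => ~~ bans Bs m j r (amsg A m j r)) +
            E N (fun r => bans Bs m j r (amsg A m j r)) = 2 ^ N.
  rewrite -E_add (E_ext _ (psi := fun _ => 1)) ?E_const ?mul1n //.
  by move=> r; case: (bans _ _ _ _ _).
have HN : 2 ^ N = 2 ^ m * 2 ^ (m * F.-1).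
  by rewrite -expnD /N -mulnS prednK.
have Hk : size Bs < 2 ^ (lg (size Bs)).+1 by apply: trunc_log_ltn.
have Hm : 2 ^ m = 4 * 2 ^ (lg (size Bs)).+1 by rewrite /m /m0 !expnS; lia.
move: Hbad Hsum HN Hk Hm; nia.
Qed.
End Inst.

Lemma inst (R : realType) (T : countType) (A : seq T) (Bs : seq (seq T)) :
  (0 < size Bs)%N ->
  let l := maxlcp A Bs in
  succ_prob_ge (P1 T) A Bs (24 * (lg (lg l)).+1) (24 * (lg (lg l)).+1 * (lg (size Bs)).+1)
    (fun l' => (l <= l' <= l ^ 2)%N) (3 / 4 : R).
Proof.
move=> HBs l.
have exP : exists j, (l < Lj j)%N by exists l.+1; exact: Lj_gt.
case: (ex_minnP exP) => j Hj Hmin.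
have Hpre : forall i, (i < j)%N -> (Lj i <= l)%N.
  move=> i Hi; rewrite leqNgt; apply/negP => H; have := Hmin i H; lia.
apply: (@succ_of_E R T (P1 T) A Bs _ _ _ (m0 (size Bs) * Fb A Bs)).
  by move=> r r' Hr; rewrite /runb (run_local _ Hr).
apply: leq_trans (inst_count HBs Hj) _; rewrite leq_mul2l; apply/orP; right.
apply: E_le => r; case G: (~~ bans _ _ _ _ _) => //=.
by rewrite (inst_good HBs Hj Hpre G).
Qed.

Unset Implicit Arguments.
Local Open Scope ring_scope.

Theorem lemma11 (R : realType) (T : countType) :
  (* (1): l <= l' <= l^2, O(lg lg l) rounds, O(lg lg l * lg k) bits *)
  (exists (p : R) (C : nat), 1 / 2 < p /\
    exists P : protocol T, forall (A : seq T) (Bs : seq (seq T)),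
      (0 < size Bs)%N ->
      let l := maxlcp A Bs in
      succ_prob_ge P A Bs (C * (lg (lg l)).+1)
        (C * (lg (lg l)).+1 * (lg (size Bs)).+1)
        (fun l' => (l <= l' <= l ^ 2)%N) p)
  /\
  (* (2): l <= l' <= |A|^2, O(1) rounds, O(lg lg lg |A|) bits *)
  (exists (p : R) (C : nat), 1 / 2 < p /\
    exists P : protocol T, forall (A : seq T) (Bs : seq (seq T)),
      (0 < size Bs)%N ->
      let l := maxlcp A Bs in
      succ_prob_ge P A Bs C (C * (lg (lg (lg (size A)))).+1)
        (fun l' => (l <= l' <= (size A) ^ 2)%N) p).
Proof.
split; last exact: part2.
exists (3 / 4), 24%N; split; first exact: half_lt34.
exists (P1 T) => A Bs HBs l.
exact: inst.
Qed.
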